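(* Let $\delta\in(0,1)$ and $N,\ell,k\in\mathbb{N}$ satisfy $N\ge 10k\cdot n^{(1-\delta)\ell}$ and $k\ge 20$. If an $n$-vertex graph $G$ contains a clique of size $\lceil n^\delta\rceil$, then with probability at least $0.9$ over $G'\sim \mathrm{RGP}_{N,\ell}(G)$, the graph $G'$ contains a $k$-clique.
   Context: Randomized graph product: given an $n$-vertex graph $G=(V,E)$ and positive integers $N,\ell$, the random graph $G'=(V',E')\sim\mathrm{RGP}_{N,\ell}(G)$ is constructed as follows. For each $i\in[N]$, independently sample $\ell$ vertices uniformly at random from $V$ (independently of each other) and let $S_i\subseteq V$ be the set of sampled vertices. The vertex set is $V'=\{S_1,\dots,S_N\}$ (one vertex per index $i\in[N]$), and for distinct $i,j\in[N]$, $(S_i,S_j)\in E'$ iff $S_i\cup S_j$ induces a clique in $G$. *)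

(* Defs.v *)
From mathcomp Require Import all_boot all_order all_algebra.
From mathcomp Require Import reals exp.
Set Implicit Arguments. Unset Strict Implicit. Unset Printing Implicit Defensive.
Import Order.TTheory GRing.Theory Num.Theory.
Local Open Scope ring_scope.

(* A simple graph on a finite vertex type V: e symmetric and irreflexive
   (these are hypotheses of the theorem). *)

Definition is_clique (V : finType) (e : rel V) (K : {set V}) : bool :=
  [forall x in K, forall y in K, (x != y) ==> e x y].

(* An outcome of the RGP sampling: for each i in [N], an ordered list of
   l independent uniform vertices (outcome space is uniform). *)
Definition rgp_outcome (V : finType) (N l : nat) : finType :=
  {ffun 'I_N -> {ffun 'I_l -> V}}.

Definition rgp_set (V : finType) (N l : nat) (w : rgp_outcome V N l)
  (i : 'I_N) : {set V} := [set w i j | j : 'I_l].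

Definition rgp_edge (V : finType) (e : rel V) (N l : nat)
  (w : rgp_outcome V N l) (i j : 'I_N) : bool :=
  (i != j) && is_clique e (rgp_set w i :|: rgp_set w j).

Definition rgp_has_clique (V : finType) (e : rel V) (N l k : nat)
  (w : rgp_outcome V N l) : bool :=
  [exists I : {set 'I_N}, (#|I| == k) &&
     [forall i in I, forall j in I, (i != j) ==> rgp_edge e w i j]].

Definition unif_prob (R : numFieldType) (T : finType) (A : pred T) : R :=
  #|[set x | A x]|%:R / #|T|%:R.

(* Main.v *)
Require Import Defs.
From mathcomp Require Import all_boot all_order all_algebra.
From mathcomp Require Import reals exp.
From mathcomp Require Import ring lra.
Import Order.TTheory GRing.Theory Num.Theory.
Local Open Scope ring_scope.

Lemma sub_card (T : finType) (G : {set T}) k : (k <= #|G|)%N ->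
  exists2 I : {set T}, I \subset G & #|I| = k.
Proof.
move=> kG; exists [set x in take k (enum G)].
  by apply/subsetP => x; rewrite inE => /mem_take; rewrite mem_enum.
rewrite cardsE; move/card_uniqP: (take_uniq k (enum_uniq (mem G))) => ->.
by rewrite size_takel // -cardE.
Qed.

Lemma sum_ffun_prod (R : comNzRingType) (I J : finType) (g : I -> J -> R) :
  \sum_(w : {ffun I -> J}) \prod_i g i (w i) = \prod_i \sum_j g i j.
Proof. by rewrite bigA_distr_bigA. Qed.

Lemma sum_ind (R : comNzRingType) (J : finType) (A : {set J}) :
  \sum_j (j \in A)%:R = #|A|%:R :> R.
Proof.
rewrite -sum1_card natr_sum [RHS]big_mkcond /=; apply: eq_bigr => j _.
by case: (j \in A).
Qed.

Section Cheb.
Variables (R : realFieldType) (I U : finType).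
Local Notation W := {ffun I -> U}.

Lemma card_W : #|W|%:R = \prod_(x : I) (#|U|%:R : R).
Proof.
transitivity (\sum_(w : W) \prod_(x : I) (1 : R)).
  rewrite -sum1_card natr_sum; apply: eq_bigr => w _; by rewrite big1.
rewrite (@sum_ffun_prod R I U (fun _ _ => 1)); apply: eq_bigr => x _.
by rewrite -sum1_card natr_sum.
Qed.

Lemma sum_diag (i : I) (f : U -> R) :
  (\sum_(w : W) f (w i)) * #|U|%:R = (\sum_v f v) * #|W|%:R.
Proof.
pose g := fun x v => if x == i then f v else 1.
have -> : \sum_(w : W) f (w i) = \sum_(w : W) \prod_x g x (w x).
  apply: eq_bigr => w _; rewrite (bigD1 i) //= /g eqxx big1 ?mulr1 //.
  by move=> x /negbTE ->.
rewrite (@sum_ffun_prod R I U g) card_W.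
rewrite (bigD1 i) // [X in _ = _ * X](bigD1 i) //=.
have -> : \sum_v g i v = \sum_v f v by apply: eq_bigr => v _; rewrite /g eqxx.
have -> : \prod_(x | x != i) \sum_v g x v = \prod_(x | x != i) (#|U|%:R : R).
  apply: eq_bigr => x /negbTE xi; rewrite /g xi.
  by rewrite -sum1_card natr_sum.
by rewrite mulrAC -mulrA.
Qed.

Lemma sum_cross (i j : I) (f g : U -> R) : i != j -> \sum_v f v = 0 ->
  \sum_(w : W) f (w i) * g (w j) = 0.
Proof.
move=> ij f0.
pose G := fun x v => if x == i then f v else if x == j then g v else 1.
have -> : \sum_(w : W) f (w i) * g (w j) = \sum_(w : W) \prod_x G x (w x).
  apply: eq_bigr => w _; rewrite (bigD1 i) //= /G eqxx (bigD1 j) /=; last by rewrite eq_sym.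
  rewrite eq_sym (negbTE ij) eqxx big1 ?mulr1 //.
  by move=> x /andP[/negbTE -> /negbTE ->].
by rewrite (@sum_ffun_prod R I U G) (bigD1 i) //= /G eqxx f0 mul0r.
Qed.

Variable (A : {set U}).
Hypothesis U0 : (0 < #|U|)%N.
Let T : R := #|U|%:R.
Let a : R := #|A|%:R.
Let p : R := a / T.
Let h (v : U) : R := (v \in A)%:R - p.

Lemma T0 : 0 < T. Proof. by rewrite /T ltr0n. Qed.
Lemma pT : p * T = a. Proof. by rewrite /p divfK // gt_eqF // T0. Qed.
Lemma p0 : 0 <= p. Proof. by rewrite /p divr_ge0 // ?ler0n. Qed.

Lemma sum_h : \sum_v h v = 0.
Proof.
rewrite sumrB sum_ind sumr_const -[p *+ _]mulr_natr -/T.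
by rewrite -/T pT subrr.
Qed.

Lemma sum_h2 : \sum_v h v ^+ 2 <= a.
Proof.
have -> : \sum_v h v ^+ 2 = \sum_v ((v \in A)%:R * (1 - 2 * p) + p ^+ 2).
  apply: eq_bigr => v _; rewrite /h; case: (v \in A) => /=; ring.
rewrite big_split /= -mulr_suml sum_ind sumr_const -[p ^+ 2 *+ _]mulr_natr -/T -/a.
have a0 : 0 <= a by rewrite /a ler0n.
have := pT; have := p0; nra.
Qed.


Lemma var_bound :
  \sum_(w : W) (\sum_i h (w i)) ^+ 2 <= #|I|%:R * p * #|W|%:R.
Proof.
have -> : \sum_(w : W) (\sum_i h (w i)) ^+ 2 =
          \sum_i \sum_(w : W) h (w i) ^+ 2.
  transitivity (\sum_(w : W) \sum_i \sum_j h (w i) * h (w j)).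
    apply: eq_bigr => w _; rewrite expr2 mulr_suml; apply: eq_bigr => i _.
    by rewrite mulr_sumr.
  rewrite exchange_big /=; apply: eq_bigr => i _.
  rewrite exchange_big /= (bigD1 i) //= [X in _ + X]big1 ?addr0.
    by apply: eq_bigr => w _; rewrite expr2.
  by move=> j ji; apply: sum_cross; [rewrite eq_sym | exact: sum_h].
have Hi : forall i, \sum_(w : W) h (w i) ^+ 2 <= p * #|W|%:R.
  move=> i; rewrite -(ler_pM2r T0) (sum_diag i (fun v => h v ^+ 2)) /=.
  rewrite mulrAC pT; apply: ler_wpM2r; first by rewrite ler0n.
  exact: sum_h2.
apply: le_trans (ler_sum _ (fun i _ => Hi i)) _.
by rewrite sumr_const -[_ *+ #|xpredT|]mulr_natl mulrA.
Qed.


Lemma cheb (k : nat) : (20 <= k)%N -> (10 * k)%:R <= #|I|%:R * p ->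
  #|[set w : W | (#|[set i | w i \in A]| < k)%N]|%:R * 10 <= (#|W|%:R : R).
Proof.
move=> k20 hk.
set B := [set w : W | _].
set mu := #|I|%:R * p.
have k20R : 20 <= (k%:R : R) by rewrite (ler_nat R 20 k).
have hk' : 10 * (k%:R : R) <= mu by rewrite -(natrM R 10 k).
have Hbad : forall w, w \in B -> (81/100) * mu ^+ 2 <= (\sum_i h (w i)) ^+ 2.
  move=> w; rewrite inE => cnt.
  have -> : \sum_i h (w i) = #|[set i | w i \in A]|%:R - mu.
    rewrite sumrB -sum_ind sumr_const -[p *+ _]mulr_natl; congr (_ - _).
    by apply: eq_bigr => i _; rewrite inE.
  have : (#|[set i | w i \in A]|%:R : R) <= k%:R by rewrite ler_nat ltnW.
  have : 0 <= (#|[set i | w i \in A]|%:R : R) by rewrite ler0n.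
  nra.
have Hsum : (81/100 * mu ^+ 2) *+ #|B| <= \sum_(w : W) (\sum_i h (w i)) ^+ 2.
  rewrite -sumr_const; apply: le_trans (ler_sum _ (fun w wB => Hbad w wB)) _.
  rewrite [X in _ <= X](bigID (fun w => w \in B)) /= lerDl.
  by apply: sumr_ge0 => w _; rewrite sqr_ge0.
have := le_trans Hsum var_bound; rewrite -/mu -mulr_natr => H.
have b0 : 0 <= (#|B|%:R : R) by rewrite ler0n.
have mu0 : 200 <= mu by lra.
have H2 : mu * (81/100 * mu * #|B|%:R) <= mu * #|W|%:R.
  suff -> : mu * (81/100 * mu * #|B|%:R) = 81/100 * mu ^+ 2 * #|B|%:R by []; ring.
rewrite ler_pM2l in H2; last by lra.
nra.
Qed.

End Cheb.

Lemma pow_part (R : realType) (n s l : nat) (delta : R) (k N : nat) :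
  (0 < n)%N -> (n%:R `^ delta <= (s%:R : R)) ->
  (10 * k)%:R * ((n%:R) `^ ((1 - delta) * l%:R)) <= (N%:R : R) ->
  (10 * k)%:R <= N%:R * ((s ^ l)%:R / (n ^ l)%:R) :> R.
Proof.
move=> n0 qs hN.
set q := n%:R `^ delta.
have nR0 : 0 < (n%:R : R) by rewrite ltr0n.
have q0 : 0 < q by rewrite powR_gt0.
have E : (n%:R : R) `^ ((1 - delta) * l%:R) = (n ^ l)%:R / q ^+ l.
  rewrite mulrBl mul1r powRB; last by apply/implyP => _; rewrite pnatr_eq0 -lt0n.
  rewrite powR_mulrn ?ltW // natrX powRrM powR_mulrn //.
  exact: powR_ge0.
rewrite E in hN.
have ql : 0 < q ^+ l by rewrite exprn_gt0.
have nl : 0 < ((n ^ l)%:R : R) by rewrite ltr0n expn_gt0 n0.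
have sq : q ^+ l <= (s ^ l)%:R.
  rewrite natrX; apply: lerXn2r => //; rewrite nnegrE ?ler0n ?ltW //.
have k0 : 0 <= ((10 * k)%:R : R) by rewrite ler0n.
have step : (10 * k)%:R * ((n ^ l)%:R / q ^+ l) * ((s ^ l)%:R / (n ^ l)%:R)
    <= N%:R * ((s ^ l)%:R / (n ^ l)%:R).
  apply: ler_wpM2r => //; apply: divr_ge0; rewrite ?ler0n ?ltW //.
apply: le_trans step.
have -> : (10 * k)%:R * ((n ^ l)%:R / q ^+ l) * ((s ^ l)%:R / (n ^ l)%:R)
   = (10 * k)%:R * ((s ^ l)%:R / q ^+ l).
  by field; rewrite ?gt_eqF.
rewrite -[X in X <= _]mulr1; apply: ler_wpM2l => //.
by rewrite ler_pdivlMr // mul1r.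
Qed.

Lemma clique_sub (V : finType) (e : rel V) (K S : {set V}) :
  is_clique e K -> S \subset K -> is_clique e S.
Proof.
move=> /forallP cK /subsetP SK; apply/forallP => x; apply/implyP => xS.
apply/forallP => y; apply/implyP => yS.
by move: (cK x) => /implyP /(_ (SK x xS)) /forallP /(_ y) /implyP /(_ (SK y yS)).
Qed.

Theorem lemma2p1 (R : realType) (V : finType) (e : rel V) (delta : R)
  (N l k : nat) :
  symmetric e -> irreflexive e -> (0 < #|V|)%N ->
  0 < delta < 1 ->
  (10 * k)%:R * ((#|V|)%:R `^ ((1 - delta) * l%:R)) <= (N%:R : R) ->
  (20 <= k)%N ->
  (exists K : {set V},
      is_clique e K /\ #|K| = `|Num.ceil ((#|V|)%:R `^ delta)|%N) ->
  9 / 10 <= unif_prob R (rgp_has_clique e k (N:=N) (l:=l)).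
Proof.
move=> esym eirr n0 /andP[d0 d1] hN k20 [K [cK cardK]].
pose A := [set f : {ffun 'I_l -> V} | [forall j, f j \in K]].
have cardA : #|A| = (#|K| ^ l)%N.
  rewrite -[l in RHS]card_ord -card_ffun_on; apply: eq_card => f.
  by rewrite inE; apply/forallP/ffun_onP.
have cardU : #|{ffun 'I_l -> V}| = (#|V| ^ l)%N by rewrite card_ffun card_ord.
have U0 : (0 < #|{ffun 'I_l -> V}|)%N by rewrite cardU expn_gt0 n0.
have s_ge : (#|V|%:R : R) `^ delta <= #|K|%:R.
  rewrite cardK natr_absz ger0_norm ?ceil_ge //.
  by rewrite ceil_ge0 (lt_le_trans _ (powR_ge0 _ _)) // ltrN10.
have hp := @pow_part R #|V| #|K| l delta k N n0 s_ge hN.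
have hc := @cheb R 'I_N {ffun 'I_l -> V} A U0 k k20.
rewrite card_ord cardA cardU in hc.
have {hc} hc := hc hp.
set B := [set w | _] in hc.
set Hs := [set w : rgp_outcome V N l | rgp_has_clique e k w].
have sub : ~: Hs \subset B.
  apply/subsetP => w; rewrite !inE; apply: contraR; rewrite -leqNgt => kc.
  have [I IG cI] := @sub_card _ _ _ kc.
  apply/existsP; exists I; rewrite cI eqxx /=.
  apply/forallP => i; apply/implyP => iI; apply/forallP => j; apply/implyP => jI.
  apply/implyP => ij; rewrite /rgp_edge ij /=.
  apply: (@clique_sub V e K _ cK); apply/subsetP => x; rewrite inE.
  have Hsub : forall i, i \in I -> x \in rgp_set w i -> x \in K.
    move=> i0 i0I /imsetP [j0 _ ->].
    by move/subsetP: IG => /(_ i0 i0I); rewrite !inE => /forallP.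
  by case/orP; [apply: Hsub iI | apply: Hsub jI].
have cC := cardsC Hs.
have le1 := subset_leq_card sub.
have W0 : (0 < #|rgp_outcome V N l|)%N.
  by rewrite /rgp_outcome card_ffun expn_gt0 U0.
rewrite /unif_prob -/Hs ler_pdivlMr ?ltr0n //.
have : (#|~: Hs|%:R : R) <= #|B|%:R by rewrite ler_nat.
have : (#|rgp_outcome V N l|%:R : R) = #|Hs|%:R + #|~: Hs|%:R.
  by rewrite -natrD cC.
lra.
Qed.
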